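(* Let $xy\in\{0,1\}^n$ be a characteristic string. Then there is an $x$-balanced fork $F\vdash xy$ if and only if $\mu_x(y)\ge0$.
   Context: Characteristic strings and forks. A characteristic string is $w=w_1\dots w_n\in\{0,1\}^n$; index $i$ is honest if $w_i=0$ and adversarial if $w_i=1$. A fork for $w$ is a rooted tree with edges directed away from the root $r$ and labeling $\ell:V\to\{0,\dots,n\}$ with (F1) $\ell(r)=0$; (F2) labels strictly increasing along directed paths; (F3) each honest index labels exactly one vertex; (F4) for honest $i<j$ the vertex labeled $i$ has strictly smaller depth than the vertex labeled $j$. Write $F\vdash w$. A vertex is honest if it is the root or labeled by an honest index. A tine is a directed path from the root; its length is its number of edges, $\ell(t)$ the label of its last vertex; $\mathrm{height}(F)$ is the maximum tine length. A fork is closed if every leaf is honest; a closed fork has a unique longest tine $\hat t$. For closed $F\vdash w$ and tine $t$: $\mathrm{gap}(t)=\mathrm{length}(\hat t)-\mathrm{length}(t)$, $\mathrm{reserve}(t)=|\{i:w_i=1,\ i>\ell(t)\}|$, $\mathrm{reach}(t)=\mathrm{reserve}(t)-\mathrm{gap}(t)$. For $w=xy$, tines $t_1,t_2$ are disjoint over $y$ (written $t_1\not\sim_x t_2$) if they share no edge terminating at a vertex with label $>|x|$ (a tine may be paired with itself). $\mu_x(F)=\max\min\{\mathrm{reach}(t_1),\mathrm{reach}(t_2)\}$ over pairs disjoint over $y$, and $\mu_x(y)=\max\{\mu_x(F):F\vdash xy\text{ closed}\}$. A fork $F\vdash xy$ is $x$-balanced if it contains tines $t_1\not\sim_x t_2$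 with $\mathrm{length}(t_1)=\mathrm{length}(t_2)=\mathrm{height}(F)$. *)

(* Defs.v *)
From mathcomp Require Import all_boot all_order all_algebra.
Set Implicit Arguments. Unset Strict Implicit. Unset Printing Implicit Defensive.
Import Order.TTheory GRing.Theory Num.Theory.

(* Characteristic strings: w : seq bool, [true] = adversarial (1), [false] = honest (0).
   Indices are 1-based: w_i = nth true w i.-1 for 1 <= i <= size w. *)
Definition adv (w : seq bool) (i : nat) : bool :=
  (0 < i <= size w) && nth false w i.-1.
Definition honest_idx (w : seq bool) (i : nat) : bool :=
  (0 < i <= size w) && ~~ nth true w i.-1.

(* A rooted tree with vertex set {0,...,fsize}, root 0, and each non-root
   vertex v having parent par v < v (edge par v -> v); plus a labeling. *)
Record fork_data := ForkData {
  fsize : nat;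
  par : nat -> nat;
  lab : nat -> nat }.

Definition vert (F : fork_data) : seq nat := iota 0 (fsize F).+1.

Fixpoint depth_aux (p : nat -> nat) (k v : nat) : nat :=
  match k with
  | 0 => 0
  | k'.+1 => if v == 0 then 0 else (depth_aux p k' (p v)).+1
  end.

Definition depth (F : fork_data) (v : nat) : nat := depth_aux (par F) v v.

Definition is_fork (w : seq bool) (F : fork_data) : Prop :=
  (forall v, 0 < v <= fsize F -> par F v < v) /\
  (forall v, v <= fsize F -> lab F v <= size w) /\
  lab F 0 = 0 /\
  (forall v, 0 < v <= fsize F -> lab F (par F v) < lab F v) /\
  (forall i, honest_idx w i -> count (fun v => lab F v == i) (vert F) = 1) /\
  (forall u v, u <= fsize F -> v <= fsize F ->
     honest_idx w (lab F u) -> honest_idx w (lab F v) ->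
     lab F u < lab F v -> depth F u < depth F v).

Definition honest_vertex (w : seq bool) (F : fork_data) (v : nat) : bool :=
  (v == 0) || honest_idx w (lab F v).

Definition is_leaf (F : fork_data) (v : nat) : bool :=
  ~~ has (fun u => (u != 0) && (par F u == v)) (vert F).

Definition closed_fork (w : seq bool) (F : fork_data) : Prop :=
  forall v, v <= fsize F -> is_leaf F v -> honest_vertex w F v.

(* Tines are identified with their terminal vertex v (the unique root-to-v path). *)
Definition height (F : fork_data) : nat := \max_(v <- vert F) depth F v.

Definition on_tine (F : fork_data) (u v : nat) : bool :=
  has (fun k => iter k (par F) v == u) (iota 0 v.+1).

(* tines t1, t2 (ending at v1, v2) are disjoint over y, where w = x y:
   they share no edge terminating at a vertex labeled > |x|.
   The edges of a tine are in bijection with its non-root vertices. *)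
Definition disjoint_over (x : seq bool) (F : fork_data) (v1 v2 : nat) : bool :=
  ~~ has (fun u => [&& u != 0, size x < lab F u, on_tine F u v1 & on_tine F u v2])
         (vert F).

Definition gap (F : fork_data) (v : nat) : nat := height F - depth F v.

Definition reserve (w : seq bool) (F : fork_data) (v : nat) : nat :=
  count (fun i => adv w i) (iota (lab F v).+1 (size w - lab F v)).

Definition reach (w : seq bool) (F : fork_data) (v : nat) : int :=
  ((reserve w F v)%:Z - (gap F v)%:Z)%R.

(* mu_x(F): max over pairs of tines disjoint over y of min(reach t1, reach t2).
   The pair (root, root) is always disjoint over y, so seeding the max with its
   value does not change it. *)
Definition mu_fork (x y : seq bool) (F : fork_data) : int :=
  \big[Num.max/Num.min (reach (x ++ y) F 0) (reach (x ++ y) F 0)]_(v1 <- vert F)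
   \big[Num.max/Num.min (reach (x ++ y) F 0) (reach (x ++ y) F 0)]_(v2 <- vert F | disjoint_over x F v1 v2)
     Num.min (reach (x ++ y) F v1) (reach (x ++ y) F v2).

Definition is_mu (x y : seq bool) (m : int) : Prop :=
  (exists F, is_fork (x ++ y) F /\ closed_fork (x ++ y) F /\ mu_fork x y F = m) /\
  (forall F, is_fork (x ++ y) F -> closed_fork (x ++ y) F -> (mu_fork x y F <= m)%R).

Definition x_balanced (x : seq bool) (F : fork_data) : Prop :=
  exists v1 v2, v1 <= fsize F /\ v2 <= fsize F /\ disjoint_over x F v1 v2 /\
    depth F v1 = height F /\ depth F v2 = height F.

(* Main.v *)
Require Import Defs.
From mathcomp Require Import all_boot all_order all_algebra.
From mathcomp Require Import zify.
From Stdlib Require Import Classical.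
Import Order.TTheory GRing.Theory Num.Theory.
Set Implicit Arguments. Unset Strict Implicit. Unset Printing Implicit Defensive.

Definition anc (p : nat -> nat) (a c : nat) := exists k, iter k p c = a.
Definition tree (F : fork_data) := forall v, 0 < v <= fsize F -> par F v < v.
Definition valid (F : fork_data) := tree F /\ par F 0 = 0.

Lemma iter_sub F k c : valid F -> c <= fsize F -> iter k (par F) c <= c - k.
Proof.
move=> [Ht H0] Hc; elim: k => [|k IH]; first by rewrite subn0.
rewrite iterS; set a := iter k (par F) c in IH *.
case: (posnP a) => [->|Ha]; first by rewrite H0.
have : par F a < a by apply: Ht; rewrite Ha /=; lia.
lia.
Qed.

Lemma anc_le F a c : valid F -> c <= fsize F -> anc (par F) a c -> a <= c.
Proof. move=> HF Hc [k <-]; have := iter_sub k HF Hc; lia. Qed.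

Lemma anc_refl p a : anc p a a.
Proof. by exists 0. Qed.

Lemma anc_trans p a b c : anc p a b -> anc p b c -> anc p a c.
Proof. by move=> [k1 <-] [k2 <-]; exists (k1 + k2); rewrite iterD. Qed.

Lemma anc_par p a c : anc p a (p c) -> anc p a c.
Proof. by move=> [k <-]; exists k.+1; rewrite iterSr. Qed.

Lemma on_tine_anc F a c : valid F -> c <= fsize F ->
  on_tine F a c <-> anc (par F) a c.
Proof.
move=> HF Hc; split.
  by move=> /hasP [k _ /eqP <-]; exists k.
move=> [k Hk]; apply/hasP.
case: (leqP k c) => Hkc.
  by exists k; [rewrite mem_iota; lia | apply/eqP].
exists c; first by rewrite mem_iota; lia.
have := iter_sub k HF Hc; have := iter_sub c HF Hc.
rewrite subnn; move=> h1 h2; apply/eqP; rewrite -Hk; lia.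
Qed.

Lemma da_ext p q k v : (forall z, 0 < z <= v -> p z = q z /\ p z < z) ->
  depth_aux p k v = depth_aux q k v.
Proof.
elim: k v => [|k IH] v H //=; case: eqP => // /eqP Hv.
have [E L] := H v ltac:(lia).
rewrite -E IH // => z Hz; apply: H; lia.
Qed.

Lemma da_fuel p k k' v : (forall z, 0 < z <= v -> p z < z) -> v <= k -> v <= k' ->
  depth_aux p k v = depth_aux p k' v.
Proof.
elim: k k' v => [|k IH] [|k'] v H Hk Hk' //=.
- by have -> : v = 0 by lia.
- by have -> : v = 0 by lia.
case: eqP => // /eqP Hv; have L := H v ltac:(lia).
congr S; apply: IH; try lia; move=> z Hz; apply: H; lia.
Qed.

Lemma depth0 F : depth F 0 = 0.
Proof. by []. Qed.

Lemma depthE F v : tree F -> 0 < v <= fsize F -> depth F v = (depth F (par F v)).+1.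
Proof.
move=> Ht Hv; rewrite /depth.
case: v Hv => [|v] Hv; first by lia.
rewrite [LHS]/=; congr S.
have L := Ht v.+1 Hv.
apply: da_fuel; try lia; move=> z Hz; apply: Ht; lia.
Qed.

Lemma depth_le_height F v : v <= fsize F -> depth F v <= height F.
Proof. by move=> Hv; apply: (leq_bigmax_seq v) => //; rewrite mem_iota; lia. Qed.

Lemma height_le F B : (forall v, v <= fsize F -> depth F v <= B) -> height F <= B.
Proof. by move=> H; apply/bigmax_leqP_seq => v; rewrite mem_iota => Hv _; apply: H; lia. Qed.

Definition cnt (w : seq bool) a b := count (adv w) (iota a.+1 (b - a)).

Lemma reserveE w F v : reserve w F v = cnt w (lab F v) (size w).
Proof. by []. Qed.

Lemma cnt_split w a b c : a <= b <= c -> cnt w a c = cnt w a b + cnt w b c.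
Proof.
move=> H; rewrite /cnt.
have -> : c - a = (b - a) + (c - b) by lia.
rewrite iotaD count_cat; congr (_ + count _ (iota _ _)); lia.
Qed.

Lemma cnt_last w b c : b < c -> adv w c -> 0 < cnt w b c.
Proof.
move=> H A; rewrite /cnt -has_count; apply/hasP; exists c => //.
rewrite mem_iota; lia.
Qed.

Lemma cnt_le w a c : cnt w a c <= c.
Proof. rewrite /cnt; apply: leq_trans (count_size _ _) _; rewrite size_iota; lia. Qed.

Lemma cnt_step w g a n : g < cnt w a n ->
  exists l, [/\ a < l <= n, adv w l & g <= cnt w l n].
Proof.
move: {2}(n - a) (erefl (n - a)) => d; elim: d a => [|d IH] a Hd.
  by rewrite /cnt Hd.
rewrite /cnt Hd /= => H.
case A: (adv w a.+1).
  exists a.+1; split => //; first lia.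
  rewrite /cnt; have -> : n - a.+1 = d by lia.
  by move: H; rewrite A /=; lia.
have E : n - a.+1 = d by lia.
have [l [H1 H2 H3]] := IH a.+1 E ltac:(by rewrite /cnt E; move: H; rewrite A).
by exists l; split => //; lia.
Qed.

Definition extends (F F' : fork_data) :=
  fsize F <= fsize F' /\ forall z, z <= fsize F -> par F' z = par F z /\ lab F' z = lab F z.

Lemma extends_refl F : extends F F.
Proof. by split. Qed.

Lemma extends_trans F1 F2 F3 : extends F1 F2 -> extends F2 F3 -> extends F1 F3.
Proof.
move=> [s1 h1] [s2 h2]; split; first lia.
move=> z Hz; have [a b] := h1 z Hz; have [c d] := h2 z ltac:(lia).
by rewrite c d.
Qed.

Lemma depth_extends F F' z : tree F -> extends F F' -> z <= fsize F ->
  depth F' z = depth F z.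
Proof.
move=> Ht [s h] Hz; rewrite /depth; symmetry; apply: da_ext => y Hy.
have [a _] := h y ltac:(lia); split; first by [].
apply: Ht; lia.
Qed.

Lemma iter_agree F q k c : valid F -> c <= fsize F ->
  (forall z, z <= fsize F -> q z = par F z) -> iter k q c = iter k (par F) c.
Proof.
move=> HF Hc Hq; elim: k => [|k IH] //=; rewrite IH Hq //.
have := iter_sub k HF Hc; lia.
Qed.

Lemma anc_extends F F' a c : valid F -> extends F F' -> c <= fsize F ->
  anc (par F') a c <-> anc (par F) a c.
Proof.
move=> HF [s h] Hc.
have E k : iter k (par F') c = iter k (par F) c.
  by apply: iter_agree => // z Hz; have [] := h z Hz.
by split => -[k Hk]; exists k; rewrite ?E // -E.
Qed.

Definition ext1 (F : fork_data) p l := ForkData (fsize F).+1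
  (fun z => if z == (fsize F).+1 then p else par F z)
  (fun z => if z == (fsize F).+1 then l else lab F z).

Lemma ext1_extends F p l : extends F (ext1 F p l).
Proof.
split => /= [|z Hz]; first lia.
by have -> : (z == (fsize F).+1) = false by apply/eqP; lia.
Qed.

Lemma ext1_valid F p l : valid F -> p <= fsize F -> valid (ext1 F p l).
Proof.
move=> [Ht H0] Hp; split => [v Hv|] /=; last by rewrite H0.
move: Hv => /= Hv; case: eqP => [->|/eqP Hne]; first lia.
apply: Ht; lia.
Qed.

Lemma ext1_depth_new F p l : valid F -> p <= fsize F ->
  depth (ext1 F p l) (fsize F).+1 = (depth F p).+1.
Proof.
move=> HF Hp; have [Ht' _] := ext1_valid l HF Hp.
rewrite (depthE Ht'); last by rewrite /=; lia.
rewrite /= eqxx; congr S; apply: depth_extends => //; first by case: HF.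
exact: ext1_extends.
Qed.

Lemma vert_ext1 F p l : vert (ext1 F p l) = vert F ++ [:: (fsize F).+1].
Proof.
have E n : iota 0 n.+2 = iota 0 n.+1 ++ [:: n.+1] by rewrite -(addn1 n.+1) iotaD.
exact: E.
Qed.

Lemma ext1_height F p l : valid F -> p <= fsize F ->
  height (ext1 F p l) = maxn (height F) (depth F p).+1.
Proof.
move=> HF Hp; rewrite /height vert_ext1.
rewrite big_cat /= big_cons big_nil ext1_depth_new // maxn0.
congr maxn; apply: eq_big_seq => z; rewrite mem_iota => Hz.
apply: depth_extends; [by case: HF | exact: ext1_extends | lia].
Qed.

Lemma ext1_anc_new F p l a : valid F -> p <= fsize F ->
  anc (par (ext1 F p l)) a (fsize F).+1 -> a = (fsize F).+1 \/ anc (par F) a p.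
Proof.
move=> HF Hp [[|k] Hk]; first by left.
right; move: Hk; rewrite iterSr /= eqxx => Hk.
apply/(anc_extends _ HF (ext1_extends F p l) Hp); by exists k.
Qed.

Lemma adv_not_honest w l : adv w l -> ~~ honest_idx w l.
Proof.
rewrite /adv /honest_idx => /andP [R A]; rewrite R /=.
have Hl : l.-1 < size w by lia.
by rewrite (set_nth_default false) // A.
Qed.

Lemma ext1_fork w F p l : is_fork w F -> par F 0 = 0 -> p <= fsize F ->
  lab F p < l -> l <= size w -> adv w l -> is_fork w (ext1 F p l).
Proof.
move=> [Ht [Hl [H1 [H2 [H3 H4]]]]] H0 Hp Hlp Hls A.
have HF : valid F by [].
have [Ht' _] := ext1_valid l HF Hp.
have NH := adv_not_honest A.
have old z : z <= fsize F -> (z == (fsize F).+1) = false by move=> Hz; apply/eqP; lia.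
split; first exact: Ht'.
split => [v Hv /=|]; first by case: eqP => // /eqP Hne; apply: Hl; move: Hv => /=; lia.
split; first by rewrite /=.
split => [v Hv /=|].
  move: Hv => /= Hv.
  case: (v =P (fsize F).+1) => [E|/eqP Hne]; first by subst v; rewrite old.
  rewrite old; [apply: H2; lia | have := Ht v ltac:(lia); lia].
split => [i Hi|].
  rewrite vert_ext1 count_cat.
  have -> : count (fun v => lab (ext1 F p l) v == i) [:: (fsize F).+1] = 0.
    by rewrite /= eqxx; case: eqP => // E; move: NH; rewrite E Hi.
  rewrite addn0 -(H3 i Hi); apply: eq_in_count => z; rewrite mem_iota => Hz /=.
  rewrite old //; lia.
move=> u v Hu Hv /=.
have nn z : z <= (fsize F).+1 -> honest_idx w (lab (ext1 F p l) z) -> z <= fsize F.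
  move=> Hz /=; case: eqP => [_ Hh|/eqP]; [by move: NH; rewrite Hh | lia].
move=> hu hv; have Hu' := nn u Hu hu; have Hv' := nn v Hv hv.
move: hu hv; rewrite /= !old // => hu hv huv.
rewrite !(depth_extends _ (ext1_extends F p l)) //; exact: H4.
Qed.

Lemma chain w g F v : is_fork w F -> par F 0 = 0 -> v <= fsize F ->
  g <= cnt w (lab F v) (size w) ->
  exists F' e, [/\ is_fork w F', par F' 0 = 0 & extends F F'] /\ [/\ e <= fsize F',
   depth F' e = depth F v + g, height F' = maxn (height F) (depth F v + g) &
   forall u, anc (par F') u e -> u <= fsize F -> anc (par F) u v].
Proof.
elim: g F v => [|g IH] F v HF H0 Hv Hg.
  exists F, v; split; first by split => //; exact: extends_refl.
  split => //.
  - by rewrite addn0.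
  - by rewrite addn0; have := depth_le_height Hv; lia.
have [l [/andP [Hl1 Hl2] A Hgl]] := cnt_step Hg.
have HF1 : is_fork w (ext1 F v l) by apply: ext1_fork => //; lia.
have H01 : par (ext1 F v l) 0 = 0 by [].
have Hval : valid F by split => //; case: HF.
have [F' [e [[HF' H0' Hext] [He Hd Hh Ha]]]] :=
  IH (ext1 F v l) (fsize F).+1 HF1 H01 (leqnn _) ltac:(by rewrite /= eqxx).
exists F', e; split; first split => //.
- exact: extends_trans (ext1_extends F v l) Hext.
split => //.
- by rewrite Hd ext1_depth_new //; lia.
- rewrite Hh ext1_depth_new // ext1_height //; lia.
move=> u Hu Hun.
have [E|//] := ext1_anc_new Hval Hv (Ha u Hu ltac:(simpl; lia)).
lia.
Qed.

Definition norm (F : fork_data) :=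
  ForkData (fsize F) (fun z => if z == 0 then 0 else par F z) (lab F).

Lemma depth_norm F v : tree F -> v <= fsize F -> depth (norm F) v = depth F v.
Proof.
move=> Ht Hv; rewrite /depth; apply: da_ext => z Hz /=.
have -> : (z == 0) = false by apply/eqP; lia.
split => //; apply: Ht; lia.
Qed.

Lemma height_norm F : tree F -> height (norm F) = height F.
Proof.
move=> Ht; rewrite /height; apply: eq_big_seq => z; rewrite mem_iota => Hz.
apply: depth_norm => //; lia.
Qed.

Lemma reach_norm w F v : tree F -> v <= fsize F -> reach w (norm F) v = reach w F v.
Proof. by move=> Ht Hv; rewrite /reach /gap height_norm // depth_norm. Qed.

Lemma norm_fork w F : is_fork w F -> is_fork w (norm F) /\ par (norm F) 0 = 0.
Proof.
move=> [Ht [Hl [H1 [H2 [H3 H4]]]]]; split => //.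
have nz v : 0 < v -> (v == 0) = false by move=> H; apply/eqP; lia.
split => [v Hv /=|]; first by rewrite nz; [apply: Ht | lia].
split => //; split => //.
split => [v Hv /=|]; first by rewrite nz; [apply: H2 | lia].
split => // u v Hu Hv hu hv huv; rewrite !depth_norm //; exact: H4.
Qed.

Lemma iter_norm F k c u : iter k (par (norm F)) c = u -> u != 0 -> iter k (par F) c = u.
Proof.
elim: k u => [|k IH] u //=.
case: eqP => [_ <-|/eqP Hne E Hu]; first by rewrite eqxx.
by rewrite (IH _ erefl).
Qed.

Lemma disjoint_norm x F a b : disjoint_over x F a b -> disjoint_over x (norm F) a b.
Proof.
move=> /hasPn H; apply/hasPn => u Hu; apply/negP => /and4P [Hu0 Hl T1 T2].
have := H u Hu; rewrite Hu0 Hl /=.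
move: T1 T2 => /hasP [k1 K1 /eqP E1] /hasP [k2 K2 /eqP E2].
rewrite negb_and; case/orP => /hasPn.
- by move=> /(_ k1 K1); rewrite (iter_norm E1 Hu0) eqxx.
- by move=> /(_ k2 K2); rewrite (iter_norm E2 Hu0) eqxx.
Qed.

Lemma backward x y F v1 v2 : is_fork (x ++ y) F -> v1 <= fsize F -> v2 <= fsize F ->
  disjoint_over x F v1 v2 -> (0 <= reach (x ++ y) F v1)%R -> (0 <= reach (x ++ y) F v2)%R ->
  exists F', is_fork (x ++ y) F' /\ x_balanced x F'.
Proof.
set w := x ++ y.
move=> HF Hv1 Hv2 Hdis R1 R2.
have Ht : tree F by case: HF.
rewrite -(reach_norm w Ht Hv1) in R1; rewrite -(reach_norm w Ht Hv2) in R2.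
move/disjoint_norm: Hdis => Hdis.
have [HF0 H00] := norm_fork HF.
set F0 := norm F in R1 R2 Hdis HF0 H00.
have Hv01 : v1 <= fsize F0 by [].
have Hv02 : v2 <= fsize F0 by [].
have G1 : gap F0 v1 <= cnt w (lab F0 v1) (size w) by move: R1; rewrite /reach reserveE; lia.
have G2 : gap F0 v2 <= cnt w (lab F0 v2) (size w) by move: R2; rewrite /reach reserveE; lia.
have [F1 [e1 [[HF1 H01 X1] [He1 Hd1 Hh1 Ha1]]]] := chain HF0 H00 Hv01 G1.
have [s1 a1] := X1.
have Hv12 : v2 <= fsize F1 by lia.
have G2' : gap F0 v2 <= cnt w (lab F1 v2) (size w) by have [_ ->] := a1 v2 Hv02.
have [F2 [e2 [[HF2 H02 X2] [He2 Hd2 Hh2 Ha2]]]] := chain HF1 H01 Hv12 G2'.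
have V0 : valid F0 by split => //; case: HF0.
have V1 : valid F1 by split => //; case: HF1.
have V2 : valid F2 by split => //; case: HF2.
have dd1 := depth_le_height Hv01.
have dd2 := depth_le_height Hv02.
have Ed2 : depth F1 v2 = depth F0 v2 by apply: depth_extends => //; case: V0.
have HH : height F2 = height F0.
  rewrite Hh2 Hh1 Ed2 /gap; lia.
exists F2; split => //.
exists e1, e2; split; first by case: X2 => ? _; lia.
split => //; split; last first.
  split.
  - rewrite (depth_extends _ X2) //; last by case: V1.
    by rewrite Hd1 HH /gap; lia.
  - by rewrite Hd2 HH Ed2 /gap; lia.
apply/hasPn => u Hu; apply/negP => /and4P [Hu0 Hl T1 T2].
have He12 : e1 <= fsize F2 by case: X2 => ? _; lia.
move/(on_tine_anc _ V2 He12): T1 => T1.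
move/(on_tine_anc _ V2 He2): T2 => T2.
move/(anc_extends _ V1 X2 He1): T1 => T1.
have Hu1 : u <= fsize F1 by have := anc_le V1 He1 T1; lia.
have T2' := Ha2 u T2 Hu1.
have Hu0' : u <= fsize F0 by have := anc_le V1 Hv12 T2'; lia.
move/(anc_extends _ V0 X1 Hv02): T2' => T2'.
have T1' := Ha1 u T1 Hu0'.
have X02 := extends_trans X1 X2.
have [_ Hlab] := (X02.2 u Hu0').
move/hasPn: Hdis => /(_ u ltac:(rewrite mem_iota; lia)).
rewrite Hu0 -Hlab Hl /=.
by rewrite (proj2 (on_tine_anc _ V0 Hv01) T1') (proj2 (on_tine_anc _ V0 Hv02) T2').
Qed.

Section Compact.
Variables (keep : pred nat) (N : nat).
Definition KK := filter keep (iota 0 N.+1).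
Definition rk v := count keep (iota 0 v).
Definition sel j := nth 0 KK j.

Lemma rk_sel_id v : v <= N -> keep v -> rk v < size KK /\ sel (rk v) = v.
Proof.
move=> Hv Hk; rewrite /sel /KK /rk.
have -> : N.+1 = v + (N.+1 - v) by lia.
rewrite iotaD filter_cat add0n.
have -> : N.+1 - v = (N - v).+1 by lia.
rewrite /= Hk size_cat size_filter /=; split; first lia.
by rewrite nth_cat size_filter ltnn subnn.
Qed.

Lemma sel_prop j : j < size KK -> keep (sel j) /\ sel j <= N.
Proof.
move=> Hj; have := mem_nth 0 Hj; rewrite mem_filter mem_iota => /andP [-> H].
split => //; rewrite /sel; lia.
Qed.

Lemma uniq_KK : uniq KK.
Proof. by rewrite filter_uniq // iota_uniq. Qed.

Lemma rk_sel j : j < size KK -> rk (sel j) = j.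
Proof.
move=> Hj; have [Hk Hs] := sel_prop Hj.
have [H1 H2] := rk_sel_id Hs Hk.
by apply/eqP; rewrite -(nth_uniq 0 H1 Hj uniq_KK); apply/eqP.
Qed.

Lemma rk_mono u v : u < v -> keep u -> rk u < rk v.
Proof.
move=> Huv Hk; rewrite /rk.
have -> : v = u + (v - u) by lia.
rewrite iotaD count_cat add0n.
have -> : v - u = (v - u - 1).+1 by lia.
by rewrite /= Hk; lia.
Qed.

Lemma rk0 : rk 0 = 0.
Proof. by []. Qed.

Lemma rk_le v : rk v <= v.
Proof. by rewrite /rk; apply: leq_trans (count_size _ _) _; rewrite size_iota. Qed.

Lemma sel0 : keep 0 -> sel 0 = 0.
Proof. by move=> Hk; have [_ H] := rk_sel_id (leq0n N) Hk. Qed.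

Lemma sel_eq0 j : j < size KK -> sel j = 0 -> j = 0.
Proof. by move=> Hj E; rewrite -(rk_sel Hj) E. Qed.

Lemma size_KK : keep 0 -> 0 < size KK.
Proof. by move=> Hk; have [H _] := rk_sel_id (leq0n N) Hk; lia. Qed.

End Compact.

Definition trim (F : fork_data) (keep : pred nat) :=
  ForkData (size (KK keep (fsize F))).-1
    (fun j => rk keep (par F (sel keep (fsize F) j)))
    (fun j => lab F (sel keep (fsize F) j)).

Section Trim.
Variables (F : fork_data) (keep : pred nat).
Hypothesis (HV : valid F) (K0 : keep 0)
  (KP : forall v, 0 < v <= fsize F -> keep v -> keep (par F v)).
Local Notation N := (fsize F).
Local Notation K := (KK keep N).
Local Notation sl := (sel keep N).
Local Notation F' := (trim F keep).

Lemma fsize_trim j : (j <= fsize F') = (j < size K).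
Proof. have := size_KK N K0; rewrite /=; lia. Qed.

Lemma sel_par j : j < size K -> par F (sl j) <= N /\ keep (par F (sl j)).
Proof.
move=> Hj; have [Hk Hs] := sel_prop Hj.
case: (posnP (sl j)) => [->|Hp]; first by rewrite HV.2.
have := HV.1 (sl j) ltac:(lia); split; first lia.
apply: KP => //; lia.
Qed.

Lemma trim_par j : j < size K -> sl (par F' j) = par F (sl j) /\ par F' j < size K.
Proof.
move=> Hj; have [H1 H2] := sel_par Hj.
by have [A B] := rk_sel_id H1 H2; split.
Qed.

Lemma trim_valid : valid F'.
Proof.
split; last by rewrite /= sel0 // HV.2.
move=> j; rewrite fsize_trim => /andP [Hj0 Hj] /=.
have [Hk Hs] := sel_prop Hj.
have Hs0 : 0 < sl j by case: (posnP (sl j)) => // E; have := sel_eq0 Hj E; lia.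
rewrite -{2}(rk_sel Hj).
apply: rk_mono; [apply: HV.1; lia | exact: (sel_par Hj).2].
Qed.

Lemma trim_depth j : j < size K -> depth F' j = depth F (sl j).
Proof.
elim/ltn_ind: j => j IH Hj.
case: (posnP j) => [->|Hj0]; first by rewrite sel0.
have Hs0 : 0 < sl j by case: (posnP (sl j)) => // E; have := sel_eq0 Hj E; lia.
have [Hk Hs] := sel_prop Hj.
rewrite (depthE trim_valid.1); last by rewrite fsize_trim Hj0.
rewrite (depthE HV.1 (v := sl j)); last by rewrite Hs0.
have [A B] := trim_par Hj.
rewrite IH //; [rewrite A // | idtac].
have := trim_valid.1 j; rewrite fsize_trim Hj0 Hj => /(_ isT); lia.
Qed.

Lemma trim_iter k j : j < size K ->
  sl (iter k (par F') j) = iter k (par F) (sl j) /\ iter k (par F') j < size K.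
Proof.
move=> Hj; elim: k => [|k [IH1 IH2]]; first by split.
rewrite !iterS; have [A B] := trim_par IH2; by rewrite A IH1.
Qed.

End Trim.

Lemma bigmax_ge (s : seq nat) (P : pred nat) (f : nat -> int) x0 v :
  v \in s -> P v -> (f v <= \big[Num.max/x0]_(i <- s | P i) f i)%R.
Proof.
elim: s => // a s IH; rewrite inE big_cons => /orP [/eqP ->|H] Hv.
  by rewrite Hv le_max lexx.
case: ifP => _; last exact: IH.
by rewrite le_max IH // orbT.
Qed.

Lemma bigmax_le (s : seq nat) (P : pred nat) (f : nat -> int) x0 B :
  (x0 <= B)%R -> (forall i, P i -> f i <= B)%R -> (\big[Num.max/x0]_(i <- s | P i) f i <= B)%R.
Proof.
move=> H0 H; elim/big_ind: _ => // a b Ha Hb; by rewrite ge_max Ha Hb.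
Qed.

Lemma bigmax_ge0_inv (s : seq nat) (P : pred nat) (f : nat -> int) x0 :
  (0 <= \big[Num.max/x0]_(i <- s | P i) f i)%R ->
  (0 <= x0)%R \/ exists i, [/\ i \in s, P i & (0 <= f i)%R].
Proof.
elim: s => [|a s IH]; first by rewrite big_nil; left.
rewrite big_cons; case: ifP => Pa.
  rewrite le_max => /orP [H|H]; first by right; exists a; rewrite inE eqxx.
  case: (IH H) => [|[i [Hi Pi Hf]]]; [by left | by right; exists i; rewrite inE Hi orbT].
move=> H; case: (IH H) => [|[i [Hi Pi Hf]]]; [by left | by right; exists i; rewrite inE Hi orbT].
Qed.

Lemma reach_le w F v : (reach w F v <= (size w)%:Z)%R.
Proof. rewrite /reach reserveE; have := cnt_le w (lab F v) (size w); lia. Qed.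

Lemma mu_le x y F : (mu_fork x y F <= (size (x ++ y))%:Z)%R.
Proof.
rewrite /mu_fork; apply: bigmax_le => [|i _]; first by rewrite minxx reach_le.
apply: bigmax_le => [|j _]; first by rewrite minxx reach_le.
by rewrite ge_min reach_le.
Qed.

Lemma exists_max (Q : int -> Prop) (B : int) a : Q a -> (forall z, Q z -> (z <= B)%R) ->
  exists m, Q m /\ (a <= m)%R /\ forall z, Q z -> (z <= m)%R.
Proof.
move=> Qa HB.
suff: forall n : nat, forall a, Q a -> (B - a <= n%:Z)%R ->
   exists m, Q m /\ (a <= m)%R /\ forall z, Q z -> (z <= m)%R.
  by move=> /(_ `|B - a|%N a Qa); apply; lia.
elim => [|n IH] {Qa}a Qa Hn.
  by exists a; split => //; split => // z /HB; lia.
case: (classic (exists z, Q z /\ (a < z)%R)) => [[z [Qz Hz]]|NE].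
  have [m [Qm [Hm1 Hm2]]] := IH z Qz ltac:(lia).
  by exists m; split => //; split => //; lia.
exists a; split => //; split => // z Qz.
case: (lerP z a) => // Hz; exfalso; apply: NE; by exists z.
Qed.

Lemma not_honest_adv w l : 0 < l <= size w -> ~~ honest_idx w l -> adv w l.
Proof.
move=> H; rewrite /honest_idx /adv H /= negbK.
have Hl : l.-1 < size w by lia.
by rewrite (set_nth_default true).
Qed.

Lemma last_honest w F v : is_fork w F -> par F 0 = 0 -> v <= fsize F ->
  exists h, [/\ honest_vertex w F h, anc (par F) h v, lab F h <= lab F v &
     depth F v <= depth F h + cnt w (lab F h) (lab F v)].
Proof.
move=> HF H0; have [Ht [Hl [H1 [H2 _]]]] := HF.
elim/ltn_ind: v => v IH Hv.
case Hh: (honest_vertex w F v).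
  by exists v; split => //; [exact: anc_refl | lia].
have Hv0 : 0 < v by case: (posnP v) => // E; move: Hh; rewrite E.
have Hpv := Ht v ltac:(lia).
have [h [Hh' Ha Hlab Hd]] := IH (par F v) Hpv ltac:(lia).
have Hl2 := H2 v ltac:(lia).
have A : adv w (lab F v).
  apply: not_honest_adv; first by have := Hl v Hv; lia.
  by move: Hh; rewrite /honest_vertex; case: eqP => //= _ ->.
exists h; split => //; first exact: anc_par.
  lia.
rewrite (depthE Ht); last lia.
rewrite (cnt_split w (b := lab F (par F v))); last lia.
have := cnt_last Hl2 A; lia.
Qed.

Lemma forward0 x y F v1 v2 : is_fork (x ++ y) F -> par F 0 = 0 ->
  v1 <= fsize F -> v2 <= fsize F -> disjoint_over x F v1 v2 ->
  depth F v1 = height F -> depth F v2 = height F ->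
  exists F', [/\ is_fork (x ++ y) F', closed_fork (x ++ y) F' & (0 <= mu_fork x y F')%R].
Proof.
set w := x ++ y.
move=> HF H0 Hv1 Hv2 Hdis Hd1 Hd2.
have HF' := HF; move: HF' => [Ht [Hl [H1 [H2 [H3 H4]]]]].
have HV : valid F by [].
pose keep := fun v => has (fun h => honest_vertex w F h && on_tine F v h) (vert F).
have keepP v : reflect (exists h, [/\ h <= fsize F, honest_vertex w F h & anc (par F) v h]) (keep v).
  apply: (iffP hasP) => [[h Hh /andP [Hh1 Hh2]]|[h [Hh Hh1 Hh2]]].
    move: Hh; rewrite mem_iota => /andP [_ Hh]; have Hh' : h <= fsize F by lia.
    by exists h; split => //; apply/(on_tine_anc _ HV Hh').
  by exists h; [rewrite mem_iota; lia | rewrite Hh1 /=; apply/(on_tine_anc _ HV)].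
have K0 : keep 0 by apply/keepP; exists 0; split => //; exact: anc_refl.
have KP v : 0 < v <= fsize F -> keep v -> keep (par F v).
  move=> Hv /keepP [h [Hh Hh1 Hh2]]; apply/keepP; exists h; split => //.
  by apply: anc_trans Hh2; exists 1.
set N := fsize F.
set K := KK keep N.
have Hsz := size_KK N K0.
have FS j : (j <= fsize (trim F keep)) = (j < size K) by exact: fsize_trim.
have VT := trim_valid HV K0 KP.
have vertT : vert (trim F keep) = iota 0 (size K).
  by rewrite /vert; change (fsize (trim F keep)) with (size K).-1; rewrite prednK.
exists (trim F keep); split.
- split; first exact: VT.1.
  split => [j|].
    rewrite FS => Hj /=; have [_ Hs] := sel_prop Hj; exact: Hl.
  split; first by rewrite /= sel0.
  split => [j|].
    rewrite FS => /andP [Hj0 Hj].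
    have [A B] := trim_par HV K0 KP Hj.
    rewrite /= in A *; rewrite A.
    have [_ Hs] := sel_prop Hj.
    apply: H2; rewrite Hs andbT.
    by case: (posnP (sel keep N j)) => // E; have := sel_eq0 Hj E; lia.
  split => [i Hi|].
    rewrite vertT -(H3 i Hi).
    have -> : count (fun v => lab (trim F keep) v == i) (iota 0 (size K)) =
              count (fun v => lab F v == i) (map (sel keep N) (iota 0 (size K))).
      by rewrite count_map.
    have -> : map (sel keep N) (iota 0 (size K)) = K by exact: (mkseq_nth 0 K).
    rewrite /K /KK count_filter; apply: eq_in_count => v; rewrite mem_iota => Hv /=.
    case E: (lab F v == i); rewrite /= ?andbF //.
    move/eqP: E => E; move: Hv => /andP [_ Hv].
    apply/keepP; exists v; split; [lia | by rewrite /honest_vertex E Hi orbT | exact: anc_refl].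
  move=> u v; rewrite !FS => Hu Hv /= hu hv huv.
  rewrite !(trim_depth HV K0 KP) //.
  have [_ Su] := sel_prop Hu; have [_ Sv] := sel_prop Hv.
  exact: H4.
- move=> j; rewrite FS => Hj; apply: contraTT => NH.
  have [Hk Hs] := sel_prop Hj.
  have Hj0 : j != 0 by move: NH; rewrite /honest_vertex; case: eqP.
  have NH' : ~~ honest_vertex w F (sel keep N j).
    rewrite /honest_vertex negb_or; apply/andP; split.
      by apply/eqP => E; have := sel_eq0 Hj E; move/eqP: Hj0.
    by move: NH; rewrite /honest_vertex negb_or => /andP [].
  move/keepP: Hk => [h [Hh Hh1 [[|k] Hk]]].
    by move: NH'; rewrite -Hk Hh1.
  set c := iter k (par F) h.
  have Pc : par F c = sel keep N j by rewrite -Hk iterS.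
  have Hc : c <= N by have := iter_sub k HV Hh; lia.
  have Hc0 : 0 < c.
    case: (posnP c) => // E; move: NH'; rewrite -Pc E H0 /honest_vertex eqxx //.
  have Kc : keep c by apply/keepP; exists h; split => //; exists k.
  have [Rc Sc] := rk_sel_id Hc Kc.
  rewrite /is_leaf negbK; apply/hasP; exists (rk keep c).
    by rewrite vertT mem_iota.
  apply/andP; split.
    have := rk_mono Hc0 K0; rewrite rk0; lia.
  by rewrite /= Sc Pc rk_sel.
-
  have [h1 [Hh1 Ha1 Hlab1 Hdh1]] := last_honest HF H0 Hv1.
  have [h2 [Hh2 Ha2 Hlab2 Hdh2]] := last_honest HF H0 Hv2.
  have Hh1N : h1 <= N by have := anc_le HV Hv1 Ha1; lia.
  have Hh2N : h2 <= N by have := anc_le HV Hv2 Ha2; lia.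
  have Kh1 : keep h1 by apply/keepP; exists h1; split => //; exact: anc_refl.
  have Kh2 : keep h2 by apply/keepP; exists h2; split => //; exact: anc_refl.
  have [R1 S1] := rk_sel_id Hh1N Kh1.
  have [R2 S2] := rk_sel_id Hh2N Kh2.
  set j1 := rk keep h1 in R1 S1; set j2 := rk keep h2 in R2 S2.
  have HH : height (trim F keep) <= height F.
    apply: height_le => j; rewrite FS => Hj.
    rewrite (trim_depth HV K0 KP Hj); apply: depth_le_height.
    by have [] := sel_prop Hj.
  have Lv1 : lab F v1 <= size w by exact: Hl.
  have Lv2 : lab F v2 <= size w by exact: Hl.
  have reachP j h v : j < size K -> sel keep N j = h -> lab F h <= lab F v -> lab F v <= size w ->
      depth F v = height F -> depth F v <= depth F h + cnt w (lab F h) (lab F v) ->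
      (0 <= reach w (trim F keep) j)%R.
    move=> Hj Sj L1 L2 Dv Dh.
    rewrite /reach /gap reserveE /= Sj (trim_depth HV K0 KP Hj) Sj.
    have := cnt_split w (a := lab F h) (b := lab F v) (c := size w) ltac:(lia).
    lia.
  have Rj1 := reachP j1 h1 v1 R1 S1 Hlab1 Lv1 Hd1 Hdh1.
  have Rj2 := reachP j2 h2 v2 R2 S2 Hlab2 Lv2 Hd2 Hdh2.
  have Dj : disjoint_over x (trim F keep) j1 j2.
    apply/hasPn => u; rewrite vertT mem_iota => /andP [_ Hu].
    apply/negP => /and4P [Hu0 Hlu T1 T2].
    have toF j h v : j < size K -> sel keep N j = h -> anc (par F) h v -> v <= N ->
        on_tine (trim F keep) u j -> on_tine F (sel keep N u) v.
      move=> Hj Sj Ahv HvN T.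
      have Hj' : j <= fsize (trim F keep) by rewrite FS.
      move/(on_tine_anc _ VT Hj'): T => [k Hk].
      have [E _] := trim_iter HV K0 KP k Hj.
      apply/(on_tine_anc _ HV HvN); apply: anc_trans Ahv.
      by exists k; rewrite -Sj -E Hk.
    have U1 := toF j1 h1 v1 R1 S1 Ha1 Hv1 T1.
    have U2 := toF j2 h2 v2 R2 S2 Ha2 Hv2 T2.
    have Hu' : u < size K by lia.
    have [_ Su] := sel_prop Hu'.
    move/hasPn: Hdis => /(_ (sel keep N u) ltac:(rewrite mem_iota; lia)).
    rewrite U1 U2 Hlu !andbT.
    by case: eqP => // E; move: Hu0; rewrite (sel_eq0 Hu' E).
  set T := trim F keep in Rj1 Rj2 Dj vertT *.
  have Hin1 : j1 \in vert T by rewrite vertT mem_iota leq0n add0n.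
  have Hin2 : j2 \in vert T by rewrite vertT mem_iota leq0n add0n.
  set x0 := Num.min (reach w T 0) (reach w T 0).
  have A2 := bigmax_ge (fun v2 => Num.min (reach w T j1) (reach w T v2)) x0 Hin2 Dj.
  have A1 := bigmax_ge (P := fun _ => true) (fun v1 => \big[Num.max/x0]_(v2 <- vert T | disjoint_over x T v1 v2)
     Num.min (reach w T v1) (reach w T v2)) x0 Hin1 isT.
  apply: le_trans A1; apply: le_trans A2 => /=.
  by rewrite le_min Rj1 Rj2.
Qed.

Lemma disj00 x F : disjoint_over x F 0 0.
Proof.
apply/hasPn => u _; apply/negP => /and4P [Hu0 _ T _].
by move: T; rewrite /on_tine /= orbF => /eqP E; rewrite -E in Hu0.
Qed.

Lemma extract x y F : (0 <= mu_fork x y F)%R ->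
  exists v1 v2, [/\ v1 <= fsize F, v2 <= fsize F, disjoint_over x F v1 v2,
     (0 <= reach (x ++ y) F v1)%R & (0 <= reach (x ++ y) F v2)%R].
Proof.
have E0 : (0 <= Num.min (reach (x ++ y) F 0) (reach (x ++ y) F 0))%R ->
  exists v1 v2, [/\ v1 <= fsize F, v2 <= fsize F, disjoint_over x F v1 v2,
     (0 <= reach (x ++ y) F v1)%R & (0 <= reach (x ++ y) F v2)%R].
  by rewrite minxx => H; exists 0, 0; split => //; exact: disj00.
rewrite /mu_fork => /bigmax_ge0_inv [/E0 //|[i [Hi _]]].
move=> /bigmax_ge0_inv [/E0 //|[j [Hj Dj]]].
rewrite le_min => /andP [R1 R2].
move: Hi Hj; rewrite !mem_iota => /andP [_ Hi] /andP [_ Hj].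
by exists i, j; split => //; lia.
Qed.

Lemma forward x y F : is_fork (x ++ y) F -> x_balanced x F ->
  exists F', [/\ is_fork (x ++ y) F', closed_fork (x ++ y) F' & (0 <= mu_fork x y F')%R].
Proof.
move=> HF [v1 [v2 [Hv1 [Hv2 [Hd [D1 D2]]]]]].
have Ht : tree F by case: HF.
have [HF0 H00] := norm_fork HF.
apply: (forward0 HF0 H00 (v1 := v1) (v2 := v2)) => //.
- exact: disjoint_norm.
- by rewrite depth_norm // height_norm.
- by rewrite depth_norm // height_norm.
Qed.

Theorem fact1 (x y : seq bool) :
  (exists F, is_fork (x ++ y) F /\ x_balanced x F) <->
  (exists m : int, is_mu x y m /\ (0 <= m)%R).
Proof.
split.
- move=> [F [HF Hb]].
  have [F' [HF' HC' Hm']] := forward HF Hb.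
  pose Q := fun z : int => exists F, is_fork (x ++ y) F /\ closed_fork (x ++ y) F /\ mu_fork x y F = z.
  have QB : forall z, Q z -> (z <= (size (x ++ y))%:Z)%R.
    by move=> z [G [_ [_ <-]]]; exact: mu_le.
  have QF : Q (mu_fork x y F') by exists F'.
  have [m [Qm [Hm1 Hm2]]] := exists_max QF QB.
  exists m; split; last exact: le_trans Hm1.
  split => // G HG HCG; apply: Hm2; by exists G.
- move=> [m [[[F [HF [_ Hm]]] _] Hm0]].
  rewrite -Hm in Hm0.
  have [v1 [v2 [Hv1 Hv2 D R1 R2]]] := extract Hm0.
  exact: backward HF Hv1 Hv2 D R1 R2.
Qed.
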